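(* Let $n\ge1$, $q$ a prime power, and let $\mathcal{F}_1\neq\mathcal{F}_2$ be two coverings of $[n]$, neither of which contains a redundant basic set. Then the combinatorial metrics $d_{\mathcal{F}_1}$ and $d_{\mathcal{F}_2}$ on $\mathbb{F}_q^n$ are different.
   Context: A family $\mathcal{A}$ of subsets of $[n]$ is a covering of $X\subset[n]$ if $X\subset\bigcup_{A\in\mathcal{A}}A$. For a covering $\mathcal{F}$ of $[n]$ (elements called basic sets) and $x\in\mathbb{F}_q^n$ with $\mathrm{supp}(x)=\{i:x_i\neq0\}$, $\mathrm{wt}_{\mathcal{F}}(x)=\min\{|\mathcal{A}|:\mathcal{A}\subset\mathcal{F},\ \mathcal{A}\text{ covers }\mathrm{supp}(x)\}$ and $d_{\mathcal{F}}(x,y)=\mathrm{wt}_{\mathcal{F}}(x-y)$. A basic set $A\in\mathcal{F}$ is redundant if there is $B\in\mathcal{F}$ with $A\subsetneq B$. *)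

(* Defs.v *)
From mathcomp Require Import all_boot all_algebra all_field.
Set Implicit Arguments. Unset Strict Implicit. Unset Printing Implicit Defensive.
Import GRing.Theory.
Local Open Scope ring_scope.

Definition covers (n : nat) (Fam : {set {set 'I_n}}) (X : {set 'I_n}) : bool :=
  X \subset \bigcup_(A in Fam) A.

Definition is_covering (n : nat) (Fam : {set {set 'I_n}}) : bool :=
  covers Fam [set: 'I_n].

Definition redundant (n : nat) (Fam : {set {set 'I_n}}) (A : {set 'I_n}) : bool :=
  (A \in Fam) && [exists B in Fam, A \proper B].

Definition supp (F : fieldType) (n : nat) (x : 'rV[F]_n) : {set 'I_n} :=
  [set i | x 0 i != 0].

(* F-weight: min number of basic sets covering supp x.  The default value
   #|Fam| is attained by Fam itself when Fam is a covering of [n]. *)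
Definition wtF (F : fieldType) (n : nat) (Fam : {set {set 'I_n}}) (x : 'rV[F]_n) : nat :=
  \big[minn/#|Fam|]_(B : {set {set 'I_n}} | (B \subset Fam) && covers B (supp x)) #|B|.

Definition distF (F : fieldType) (n : nat) (Fam : {set {set 'I_n}}) (x y : 'rV[F]_n) : nat :=
  wtF Fam (x - y).

(* Main.v *)
Require Import Defs.
From mathcomp Require Import all_boot all_algebra all_field.
Set Implicit Arguments. Unset Strict Implicit. Unset Printing Implicit Defensive.
Import GRing.Theory.

Section Aux.
Variables (F : fieldType) (n : nat).
Implicit Types (Fam : {set {set 'I_n}}) (x : 'rV[F]_n).

Lemma wt1P Fam x : is_covering Fam -> wtF Fam x = 1%N ->
  exists2 A, A \in Fam & supp x \subset A.
Proof.
move=> cov; rewrite /wtF.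
apply: (big_ind (fun v => v = 1%N -> exists2 A, A \in Fam & supp x \subset A)).
- move/eqP/cards1P => [A eA]; exists A; first by rewrite eA set11.
  move: cov; rewrite /is_covering /covers eA big_set1 => cov.
  exact: subset_trans (subsetT _) cov.
- move=> a b Ha Hb; rewrite /minn; case: ifP => _; auto.
- move=> B /andP[sBF cv] /eqP/cards1P [A eB]; exists A.
    by move: sBF; rewrite eB sub1set.
  by move: cv; rewrite /covers eB big_set1.
Qed.

Lemma bigmin_le (I : eqType) (r : seq I) (P : pred I) (f : I -> nat) d j :
  j \in r -> P j -> (\big[minn/d]_(i <- r | P i) f i <= f j)%N.
Proof.
elim: r => // a r IH; rewrite inE big_cons => /orP[/eqP<-|jr] Pj.
  by rewrite Pj geq_minl.
case: (P a); last exact: IH.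
exact: leq_trans (geq_minr _ _) (IH jr Pj).
Qed.

Lemma wt_le1 Fam x A : A \in Fam -> supp x \subset A -> (wtF Fam x <= 1)%N.
Proof.
move=> HA sA; rewrite /wtF.
have := @bigmin_le _ (index_enum {set {set 'I_n}})
  (fun B => (B \subset Fam) && covers B (supp x)) (fun B => #|B|) #|Fam| [set A].
rewrite cards1; apply; first by rewrite mem_index_enum.
by rewrite /= sub1set HA /covers big_set1.
Qed.

Lemma wt_pos Fam x A : A \in Fam -> supp x != set0 -> (0 < wtF Fam x)%N.
Proof.
move=> HA nz; rewrite /wtF.
apply: (big_ind (fun v => 0 < v)%N).
- by rewrite card_gt0; apply/set0Pn; exists A.
- by move=> a b Ha Hb; rewrite leq_min Ha Hb.
- move=> B /andP[_ cv]; rewrite card_gt0; apply: contra nz => /eqP B0.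
  by move: cv; rewrite /covers B0 big_set0 subset0.
Qed.

Lemma wt_eq1 Fam x A : A \in Fam -> supp x \subset A -> supp x != set0 ->
  wtF Fam x = 1%N.
Proof.
move=> HA sA nz; apply/eqP; rewrite eqn_leq (wt_le1 HA sA).
exact: (wt_pos HA nz).
Qed.

Definition ind (A : {set 'I_n}) : 'rV[F]_n := \row_i (if i \in A then 1%R else 0%R).

Lemma supp_ind A : supp (ind A) = A.
Proof.
apply/setP=> i; rewrite !inE mxE; case: (i \in A) => //.
  by rewrite oner_eq0.
by rewrite eqxx.
Qed.

Lemma key Fam1 Fam2 A : is_covering Fam1 -> is_covering Fam2 ->
  (forall A, ~~ redundant Fam1 A) ->
  A \in Fam1 -> A \notin Fam2 -> A != set0 ->
  exists x y : 'rV[F]_n, distF Fam1 x y <> distF Fam2 x y.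
Proof.
move=> cov1 cov2 nr1 HA1 HA2 nzA.
have sx := supp_ind A.
case E: (wtF Fam2 (ind A) == 1%N); last first.
  exists (ind A), 0%R; rewrite /distF subr0.
  rewrite (wt_eq1 HA1 _ _) ?sx //.
  by move=> h; rewrite -h eqxx in E.
move/eqP: E => E; have [B HB sAB] := wt1P cov2 E.
rewrite sx in sAB.
have nzB : B != set0.
  move/set0Pn: nzA => [i Hi]; apply/set0Pn; exists i; exact: (subsetP sAB).
have sy := supp_ind B.
exists (ind B), 0%R; rewrite /distF subr0.
rewrite (wt_eq1 (A := B) HB _ _) ?sy //.
move=> h; have [C HC sBC] := wt1P cov1 h.
rewrite sy in sBC.
move: (nr1 A); rewrite /redundant HA1 /=; apply/negP/negPn.
apply/existsP; exists C; rewrite HC /= properEneq (subset_trans sAB sBC) andbT.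
apply/eqP => eAC; subst C.
have eAB : A = B by apply/eqP; rewrite eqEsubset sAB sBC.
by rewrite eAB HB in HA2.
Qed.

Lemma nonempty Fam A : (1 <= n)%N -> is_covering Fam ->
  (forall A, ~~ redundant Fam A) -> A \in Fam -> A != set0.
Proof.
move=> hn cov nr HA; apply/eqP => A0; subst A.
have i : 'I_n by exact: Ordinal hn.
have : i \in \bigcup_(B in Fam) B by exact: (subsetP cov).
move/bigcupP => [B HB Hi].
move: (nr set0); rewrite /redundant HA /=; apply/negP/negPn.
apply/existsP; exists B; rewrite HB /= proper0; apply/set0Pn; by exists i.
Qed.

End Aux.

(* F is the finite field F_q (q = #|F|, necessarily a prime power). *)
Theorem proposition2 (F : finFieldType) (n : nat) (Fam1 Fam2 : {set {set 'I_n}}) :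
  (1 <= n)%N ->
  is_covering Fam1 -> is_covering Fam2 ->
  (forall A, ~~ redundant Fam1 A) -> (forall A, ~~ redundant Fam2 A) ->
  Fam1 != Fam2 ->
  exists x y : 'rV[F]_n, distF Fam1 x y <> distF Fam2 x y.
Proof.
move=> hn c1 c2 r1 r2 ne.
case: (boolP [exists A, (A \in Fam1) != (A \in Fam2)]); last first.
  move/existsPn => H; case/eqP: ne; apply/setP => A.
  by move: (H A); rewrite negbK => /eqP.
move/existsP => [A HA].
case E1: (A \in Fam1); rewrite E1 in HA.
- have E2 : A \notin Fam2 by move: HA; case: (A \in Fam2).
  exact: (@key F _ _ _ _ c1 c2 r1 E1 E2 (nonempty hn c1 r1 E1)).
- have E2 : A \in Fam2 by move: HA; case: (A \in Fam2).
  have [x [y H]] := @key F _ _ _ _ c2 c1 r2 E2 (negbT E1) (nonempty hn c2 r2 E2).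
  by exists x, y => h; apply: H.
Qed.
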